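(* Let $f\in\mathbb C\{\{x\}\}_{\mathbb P}$ with $R=\operatorname{rad}(f)>0$, let $G=\{a\in\mathbb C:|a|<R\}$, and for $a\in G$ let $f_a\in\mathbb C\{\{x-a\}\}_{\mathbb P}$ be the expansion of $f$ around $a$. Then $F=(f_a)_{a\in G}$ is a planar analytic function on $G$. Equivalently: for all $a,b\in G$ with $|b-a|<\operatorname{rad}(f_a)$, the expansion of $f_a$ around $b$ equals $f_b$.
   Context: Let $\mathbb P$ denote the set of finite planar reduced rooted trees (children of each vertex linearly ordered, no vertex with exactly one child), including the empty tree $\mathbf 1$ and the one-vertex tree $|$; $\deg(T)$ is the number of leaves, $L(T)$ the set of leaves. The algebra $\mathbb C\{x\}_{\mathbb P}$ has basis $\{x^T\}$, $x^{\mathbf 1}=1$, $x^|=x$, with $k$-linear operations $\omega_k$ ($k\ge2$), $\omega_k(x^{T_1},\dots,x^{T_k})=x^T$ where $T$ is obtained by attaching the nonempty $T_i$ in order as subtrees of the children of a new root (if exactly one is nonempty, $T$ is that one; if none, $T=\mathbf 1$); $y^T$ denotes the iteration of these operations along $T$ starting from $y$, e.g. $(x-a)^T$. $\mathbb C\{\{x-a\}\}_{\mathbb P}$ is the space of formal series $\sum_T\gamma_T(x-a)^T$, with coefficients $\langle f,(x-a)^T\rangle$. Radius of convergence: $\operatorname{rad}(\sum_T\gamma_T(x-a)^T)=\sup\{\rho\ge0:\sum_T|\gamma_T|\rho^{\deg T}<\infty\}$. Contraction $S|I$ for $I\subseteq L(S)$: the tree obtained from the subtree of $S$ spanned by the root-to-leaf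 paths to leaves in $I$ by suppressing all vertices with exactly one child; planar binomial coefficient $(S/T)=\#\{I\subseteq L(S):S|I=T\}$. If $f\in\mathbb C\{\{x-a\}\}_{\mathbb P}$ and $|b-a|<\operatorname{rad}(f)$, the expansion of $f$ around $b$ is $\sum_T\gamma_T(b)(x-b)^T\in\mathbb C\{\{x-b\}\}_{\mathbb P}$ with $\gamma_T(b)=\sum_{U\in\mathbb P}\langle f,(x-a)^U\rangle(U/T)(b-a)^{\deg U-\deg T}$. A planar analytic function on a region $D\subseteq\mathbb C$ is a family $F=(f_a)_{a\in D}$ with $f_a\in\mathbb C\{\{x-a\}\}_{\mathbb P}$, $\operatorname{rad}(f_a)>0$ for all $a$, such that whenever $a,b\in D$ and $\operatorname{rad}(f_a)>|b-a|$, the expansion of $f_a$ around $b$ equals $f_b$. *)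

(* Defs.v *)
From HB Require Import structures.
From mathcomp Require Import all_boot all_order all_algebra.
From mathcomp Require Import all_classical all_reals all_analysis.
From mathcomp Require Import complex.
From mathcomp Require finmap.

Set Implicit Arguments.
Unset Strict Implicit.
Unset Printing Implicit Defensive.
Import Order.TTheory GRing.Theory Num.Theory.
Import numFieldNormedType.Exports.
Local Open Scope ring_scope.

Inductive rtree : Type := RLeaf | RNode of seq rtree.

Fixpoint rdeg (t : rtree) : nat :=
  match t with RLeaf => 1%N | RNode ts => sumn (map rdeg ts) end.

(* reduced: no vertex with exactly one child (and an internal vertex has
   at least one child, i.e. it has at least two children) *)
Fixpoint rwf (t : rtree) : bool :=
  match t with RLeaf => true | RNode ts => (2 <= size ts)%N && all rwf ts end.

HB.instance Definition _ := gen_eqMixin rtree.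
HB.instance Definition _ := gen_choiceMixin rtree.

(* Contraction of a nonempty tree along a set of leaves, given as a mask
   m : bitseq of length rdeg t (the i-th leaf, in left-to-right planar
   order, is selected iff m`_i).  Result None = the empty tree 1.
   The spanned subtree is built recursively and vertices with exactly one
   remaining child are suppressed. *)
Fixpoint rcontract (t : rtree) (m : seq bool) : option rtree :=
  match t with
  | RLeaf => if head false m then Some RLeaf else None
  | RNode ts =>
      let fix go (ts : seq rtree) (m : seq bool) : seq (option rtree) :=
        match ts with
        | [::] => [::]
        | t :: ts' => rcontract t (take (rdeg t) m) :: go ts' (drop (rdeg t) m)
        end in
      let kept := pmap id (go ts m) in
      match kept with
      | [::] => None
      | [:: s] => Some s
      | _ => Some (RNode kept)
      end
  end.

(* The set P of finite planar reduced rooted trees, including the empty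
   tree 1 (= None) and the one-vertex tree | (= Some RLeaf).           *)
Definition pwf (o : option rtree) : bool :=
  if o is Some t then rwf t else true.

Record ptree := PTree { ptval : option rtree; ptwf : pwf ptval }.
HB.instance Definition _ := [isSub for ptval].
HB.instance Definition _ := [Choice of ptree by <:].

Definition ptree_empty : ptree := @PTree None isT.
Definition ptree_leaf : ptree := @PTree (Some RLeaf) isT.

Definition pdeg (T : ptree) : nat :=
  if ptval T is Some t then rdeg t else 0%N.

Definition pcontract (S : ptree) (m : seq bool) : option rtree :=
  if ptval S is Some s then rcontract s m else None.

Definition pbinom (S T : ptree) : nat :=
  #|[set m : (pdeg S).-tuple bool | pcontract S m == ptval T]|.

Section UnorderedSum.
Import finmap.
Local Open Scope fset_scope.

Definition pl_totally {I : choiceType} : set_system {fset I} :=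
  filter_from setT (fun A : {fset I} => (fun B : {fset I} => fsubset A B : Prop)).

Definition pl_partial_sum {I : choiceType} {V : zmodType}
  (x : I -> V) (A : {fset I}) : V := \sum_(i : A) x (val i).

Definition usum (I : choiceType) {K : numFieldType} {V : normedModType K}
   (x : I -> V) : V := lim (fmap (pl_partial_sum x) pl_totally).
End UnorderedSum.

(* Formal planar series in (x - a): the coefficient function
   T |-> <f, (x-a)^T>.  The centre a is bookkeeping only.              *)
Definition pser (R : realType) := ptree -> R[i].

Definition prad (R : realType) (f : pser R) : \bar R :=
  ereal_sup [set rho%:E | rho in
    [set rho : R | 0 <= rho /\
       (\esum_(T in [set: ptree]) ((ComplexField.Normc.normc (f T)) * rho ^+ pdeg T)%:E < +oo)%E]].

Definition pexpansion (R : realType) (f : pser R) (a b : R[i]) : pser R :=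
  fun T => usum (fun U : ptree =>
     (f U * (pbinom U T)%:R * (b - a) ^+ (pdeg U - pdeg T) : R[i]^o)).

Definition planar_analytic (R : realType) (D : set R[i])
  (F : R[i] -> pser R) : Prop :=
  (forall a, D a -> (0 < prad (F a))%E) /\
  (forall a b, D a -> D b -> ((ComplexField.Normc.normc (b - a))%:E < prad (F a))%E ->
      pexpansion (F a) a b = F b).

(* Main.v *)
Require Import Defs.
From HB Require Import structures.
From mathcomp Require Import all_boot all_order all_algebra.
From mathcomp Require Import all_classical all_reals all_analysis.
From mathcomp Require Import complex.
From mathcomp Require Import finmap.
From mathcomp Require Import lra ring.

Set Implicit Arguments.
Unset Strict Implicit.
Unset Printing Implicit Defensive.
Import Order.TTheory GRing.Theory Num.Theory.
Import numFieldNormedType.Exports.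

Module CombPart.


Definition odeg (o : option rtree) : nat := if o is Some t then rdeg t else 0%N.
Definition ocontract (o : option rtree) (m : seq bool) : option rtree :=
  if o is Some t then rcontract t m else None.
Definition finish (l : seq rtree) : option rtree :=
  match l with [::] => None | [:: s] => Some s | _ => Some (RNode l) end.
Fixpoint rgo (ts : seq rtree) (m : seq bool) : seq (option rtree) :=
  match ts with
  | [::] => [::]
  | t :: ts' => rcontract t (take (rdeg t) m) :: rgo ts' (drop (rdeg t) m)
  end.

Lemma rcontractE ts m : rcontract (RNode ts) m = finish (pmap id (rgo ts m)).
Proof. by []. Qed.

Fixpoint allT (P : rtree -> Prop) (ts : seq rtree) : Prop :=
  if ts is t :: ts' then P t /\ allT P ts' else True.

Definition rtree_ind2 (P : rtree -> Prop) (HL : P RLeaf)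
  (HN : forall ts, allT P ts -> P (RNode ts)) : forall t, P t :=
  fix F t := match t return P t with
  | RLeaf => HL
  | RNode ts => HN ts ((fix G ts : allT P ts :=
      match ts return allT P ts with
      | [::] => I
      | t :: ts' => conj (F t) (G ts')
      end) ts)
  end.

Lemma odeg_finish l : odeg (finish l) = sumn (map rdeg l).
Proof. by case: l => [|s [|s2 l]] //=; rewrite addn0. Qed.

Lemma sumn_pmap k : sumn (map rdeg (pmap id k)) = sumn (map odeg k).
Proof. by elim: k => [|[s|] k IH] //=; rewrite IH. Qed.

Lemma rdeg_contract t m : size m = rdeg t -> odeg (rcontract t m) = count id m.
Proof.
elim/rtree_ind2: t m => [|ts IH] m /=.
  by case: m => [|b [|]] //= _; case: b.
move=> Hs; rewrite odeg_finish sumn_pmap.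
elim: ts IH m Hs => [|t ts IHts] /=; first by move=> _ [].
move=> [IHt IH] m Hs.
have Hle : (rdeg t <= size m)%N by rewrite Hs leq_addr.
rewrite IHt ?size_take_min ?(minn_idPl Hle) // IHts //; last first.
  by rewrite size_drop Hs addKn.
by rewrite -count_cat cat_take_drop.
Qed.

Lemma pwf_finish l : all rwf l -> pwf (finish l).
Proof. by case: l => [|s [|s2 l]] //= /andP[]. Qed.

Lemma rwf_contract t m : rwf t -> pwf (rcontract t m).
Proof.
elim/rtree_ind2: t m => [|ts IH] m /=; first by case: (head false m).
case/andP=> _ Hall; apply: pwf_finish.
elim: ts IH Hall m => [|t ts IHts] //= [IHt IH] /andP[wt Hall] m.
have := IHt (take (rdeg t) m) wt.
case: (rcontract t (take (rdeg t) m)) => [s|] /= ws; last exact: IHts.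
by rewrite ws IHts.
Qed.

Lemma rcontract_full t : rwf t -> rcontract t (nseq (rdeg t) true) = Some t.
Proof.
elim/rtree_ind2: t => [|ts IH] //.
rewrite rcontractE [rdeg (RNode ts)]/= => /andP[Hsz Hall].
have -> : rgo ts (nseq (sumn (map rdeg ts)) true) = map Some ts.
  elim: ts IH Hall {Hsz} => [|t ts IHts] //= [IHt IH] /andP[wt Hall].
  rewrite nseqD take_size_cat ?size_nseq // drop_size_cat ?size_nseq //.
  by rewrite IHt // IHts.
have -> : pmap id (map Some ts) = ts by elim: ts {IH Hall Hsz} => //= t ts ->.
by case: ts Hsz {IH Hall} => [|s [|s2 l]].
Qed.

Fixpoint comp (m m' : seq bool) : seq bool :=
  match m with
  | [::] => [::]
  | b :: m0 => if b then head false m' :: comp m0 (behead m')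
               else false :: comp m0 m'
  end.

Lemma size_comp m m' : size (comp m m') = size m.
Proof. by elim: m m' => [|[] m IH] m' //=; rewrite IH. Qed.

Lemma take_comp k m m' :
  take k (comp m m') = comp (take k m) (take (count id (take k m)) m').
Proof.
elim: m k m' => [|[] m IH] [|k] m' //=.
  rewrite IH; congr (_ :: comp _ _); first by case: m'.
  by case: m'.
by rewrite IH.
Qed.

Lemma drop_comp k m m' :
  drop k (comp m m') = comp (drop k m) (drop (count id (take k m)) m').
Proof.
elim: m k m' => [|[] m IH] [|k] m' //=; rewrite ?drop0 //.
rewrite IH; congr (comp _ _); by case: m'.
Qed.

Fixpoint mseg (k : seq (option rtree)) (m : seq bool) : seq (option rtree) :=
  match k with
  | [::] => [::]
  | o :: k' => ocontract o (take (odeg o) m) :: mseg k' (drop (odeg o) m)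
  end.

Lemma pmap_mseg k m : pmap id (mseg k m) = pmap id (rgo (pmap id k) m).
Proof.
elim: k m => [|[s|] k IH] m //=; first by rewrite IH.
by rewrite drop0 IH.
Qed.

Lemma ocontract_finish l m : size m = sumn (map rdeg l) ->
  ocontract (finish l) m = finish (pmap id (rgo l m)).
Proof.
case: l => [|s [|s2 l]] //= Hs.
rewrite addn0 in Hs; rewrite -Hs take_size.
by case: (rcontract s m).
Qed.

Lemma rcontract_comp t m m' : size m = rdeg t -> size m' = count id m ->
  ocontract (rcontract t m) m' = rcontract t (comp m m').
Proof.
elim/rtree_ind2: t m m' => [|ts IH] m m'.
  case: m => [|b [|]] //= _; case: b => /=.
    by case: m' => [|b' [|]].
  by case: m'.
move=> Hs Hs'.
have Hk : rgo ts (comp m m') = mseg (rgo ts m) m'.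
  elim: ts IH m m' Hs Hs' => [|t ts IHts] /=; first by move=> _ [].
  move=> [IHt IH] m m' Hs Hs'.
  have Hle : (rdeg t <= size m)%N by rewrite Hs leq_addr.
  have Hst : size (take (rdeg t) m) = rdeg t by rewrite size_take_min (minn_idPl Hle).
  have Hc : count id m = (count id (take (rdeg t) m) + count id (drop (rdeg t) m))%N.
    by rewrite -count_cat cat_take_drop.
  have Hle' : (count id (take (rdeg t) m) <= size m')%N by rewrite Hs' Hc leq_addr.
  rewrite take_comp drop_comp -(IHt _ _ Hst); last by rewrite size_take_min (minn_idPl Hle').
  rewrite rdeg_contract // IHts //.
    by rewrite size_drop Hs addKn.
  by rewrite size_drop Hs' Hc addKn.
rewrite !rcontractE Hk pmap_mseg ocontract_finish //.
have := rdeg_contract (t := RNode ts) Hs.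
by rewrite rcontractE odeg_finish sumn_pmap Hs'.
Qed.

Lemma pwf_pcontract U m : pwf (pcontract U m).
Proof. by case: U => [[t|] w] //=; exact: rwf_contract. Qed.

Definition pcm (U : ptree) (m : seq bool) : ptree := PTree (pwf_pcontract U m).

Lemma pcontractE U m : pcontract U m = ocontract (ptval U) m.
Proof. by case: U => [[t|] w]. Qed.

Lemma pdeg_pcm U m : size m = pdeg U -> pdeg (pcm U m) = count id m.
Proof.
rewrite /pdeg /pcm /=; case: U => [[t|] w] /= Hs.
  by have := rdeg_contract Hs; rewrite /pcontract /=; case: (rcontract t m).
by case: m Hs.
Qed.

Lemma pcontract_comp U m m' : size m = pdeg U -> size m' = count id m ->
  pcontract (pcm U m) m' = pcontract U (comp m m').
Proof.
rewrite /pcm /=; case: U => [[t|] w] /= Hs Hs'.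
  by rewrite /pcontract /= -rcontract_comp //; case: (rcontract t m).
by case: m Hs Hs' => // _; case: m'.
Qed.

Local Open Scope ring_scope.
Section MSum.
Variable V : nmodType.
Definition msum n (F : seq bool -> V) := \sum_(m : n.-tuple bool) F m.

Lemma msum0 F : msum 0 F = F [::].
Proof.
rewrite /msum (big_pred1 [tuple]) // => t; rewrite (tuple0 t) /=; exact/esym/eqP.
Qed.

Lemma msumS n F : msum n.+1 F =
  msum n (fun m => F (false :: m)) + msum n (fun m => F (true :: m)).
Proof.
rewrite /msum (reindex (fun p : bool * n.-tuple bool => [tuple of p.1 :: p.2])).
  rewrite -(pair_big predT predT (fun b (t : n.-tuple bool) => F (b :: t))) /=.
  by rewrite big_bool addrC.
exists (fun t : n.+1.-tuple bool => (thead t, [tuple of behead t])).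
  by move=> [b t] _; congr (_, _); apply: val_inj.
by move=> t _; rewrite [t in RHS]tuple_eta; apply: val_inj.
Qed.

Lemma eq_msum n F G : (forall m, size m = n -> F m = G m) -> msum n F = msum n G.
Proof. by move=> H; apply: eq_bigr => m _; rewrite H // size_tuple. Qed.
End MSum.

Lemma msum_zero (V : nmodType) n : msum n (fun _ => 0 : V) = 0.
Proof. exact: big1. Qed.

Lemma count_size (m : seq bool) : (count id m <= size m)%N.
Proof. exact: count_size. Qed.

Lemma subm_count (J m : seq bool) : all2 implb J m -> (count id J <= count id m)%N.
Proof.
elim: J m => [|a J IH] [|b m] //= /andP[Hab /IH Hle].
case: a b Hab => [] [] //= _; rewrite ?add0n ?add1n ?ltnS //.
exact: leq_trans Hle (leqnSn _).
Qed.

Section MaskId.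
Variable K : comNzRingType.

Lemma msum_binom n (x y : K) :
  msum n (fun m => x ^+ (n - count id m) * y ^+ (count id m)) = (x + y) ^+ n.
Proof.
elim: n => [|n IH]; first by rewrite msum0 /= expr0 mulr1.
rewrite msumS exprS mulrDl -IH !big_distrr /=.
congr (_ + _); apply: eq_bigr => m _ /=.
  have Hc := count_size m; rewrite size_tuple in Hc.
  by rewrite add0n subSn // exprS mulrA.
by rewrite add1n subSS exprS mulrCA.
Qed.

Lemma msum_sup (J : seq bool) (x y : K) :
  msum (size J) (fun m => if all2 implb J m then
     x ^+ (size J - count id m) * y ^+ (count id m - count id J) else 0)
  = (x + y) ^+ (size J - count id J).
Proof.
elim: J => [|a J IH]; first by rewrite msum0 /= !expr0 mulr1.
rewrite msumS /=; case: a => /=.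
  rewrite (eq_msum (G := fun _ => 0)) ?msum_zero ?add0r; last by [].
  rewrite -IH; apply: eq_bigr => m _ /=.
  by rewrite add1n subSS add1n subSS.
rewrite add0n subSn ?count_size // exprS mulrDl -IH !big_distrr /=.
congr (_ + _); apply: eq_bigr => m _ /=.
  have Hc := count_size m; rewrite size_tuple in Hc.
  case: ifP => _; last by rewrite mulr0.
  by rewrite add0n subSn // exprS mulrA.
case: ifP => [H|_]; last by rewrite mulr0.
have := subm_count H => Hle.
by rewrite add1n subSS subSn // exprS mulrCA.
Qed.

Lemma msum_comp (m : seq bool) (G : seq bool -> K) :
  msum (count id m) (fun m' => G (comp m m')) =
  msum (size m) (fun J => if all2 implb J m then G J else 0).
Proof.
elim: m G => [|b m IH] G; first by rewrite !msum0.
case: b => /=.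
  rewrite add1n !msumS; congr (_ + _).
    exact: (IH (fun J => G (false :: J))).
  exact: (IH (fun J => G (true :: J))).
rewrite add0n msumS [X in _ + X](eq_msum (G := fun _ => 0)) // msum_zero addr0.
exact: (IH (fun J => G (false :: J))).
Qed.
End MaskId.

Lemma pcmE U m T : (pcm U m == T) = (pcontract U m == ptval T).
Proof. by rewrite -val_eqE. Qed.

Lemma pbinomE U T : pbinom U T = (\sum_(m : (pdeg U).-tuple bool) (pcm U m == T))%N.
Proof.
rewrite /pbinom -sum1dep_card big_mkcond /=; apply: eq_bigr => m _.
by rewrite pcmE; case: eqP.
Qed.

Definition supp (U : ptree) : seq ptree :=
  undup (map (fun m : (pdeg U).-tuple bool => pcm U m) (enum {: (pdeg U).-tuple bool})).

Lemma supp_uniq U : uniq (supp U). Proof. exact: undup_uniq. Qed.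

Lemma pcm_supp U (m : (pdeg U).-tuple bool) : pcm U m \in supp U.
Proof. by rewrite mem_undup; apply: map_f; rewrite mem_enum. Qed.

Lemma pbinom_supp U T : T \notin supp U -> pbinom U T = 0%N.
Proof.
move=> HT; rewrite pbinomE big1 // => m _.
by case: eqP => // E; move: HT; rewrite -E pcm_supp.
Qed.

Lemma count_full (m : seq bool) : count id m = size m -> m = nseq (size m) true.
Proof.
elim: m => [|b m IH] //=; case: b => /=.
  by rewrite add1n => -[/IH <-].
by rewrite add0n => H; have := count_size m; rewrite H ltnn.
Qed.

Lemma pcontract_full U : pcontract U (nseq (pdeg U) true) = ptval U.
Proof.
case: U => [[t|] w] //=; rewrite /pcontract /=; exact: rcontract_full.
Qed.

Lemma pbinom_diag U T : (pdeg U <= pdeg T)%N -> pbinom U T = (U == T).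
Proof.
move=> Hle; rewrite pbinomE (bigD1 (nseq_tuple (pdeg U) true)) //= big1 ?addn0.
  by rewrite pcmE pcontract_full val_eqE.
move=> m Hm; case: eqP => // E.
have Hsz := size_tuple m.
have Hc : count id m = size m.
  apply/eqP; rewrite eqn_leq count_size /= Hsz.
  by rewrite -(@pdeg_pcm U m) ?Hsz // E.
move: Hm; rewrite -val_eqE /= (count_full Hc) Hsz.
by rewrite eqxx.
Qed.

Section Ident.
Variable K : comNzRingType.
Local Open Scope ring_scope.

Lemma pbinom_msum U T :
  (pbinom U T)%:R = msum (pdeg U) (fun m => ((pcontract U m == ptval T) : nat)%:R) :> K.
Proof.
rewrite pbinomE natr_sum; apply: eq_bigr => m _; by rewrite pcmE.
Qed.

Lemma sum_binom U (phi : ptree -> K) :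
  \sum_(V <- supp U) (pbinom U V)%:R * phi V = msum (pdeg U) (fun m => phi (pcm U m)).
Proof.
under eq_bigr do rewrite pbinomE natr_sum big_distrl /=.
rewrite exchange_big /=; apply: eq_bigr => m _.
rewrite (bigD1_seq (pcm U m)) ?pcm_supp ?supp_uniq //= eqxx mul1r big1 ?addr0 //.
by move=> V /negbTE; rewrite eq_sym => ->; rewrite mul0r.
Qed.

Lemma binom_K1 U (x y : K) :
  \sum_(V <- supp U) (pbinom U V)%:R * (x ^+ (pdeg U - pdeg V) * y ^+ (pdeg V))
  = (x + y) ^+ (pdeg U).
Proof.
rewrite sum_binom -msum_binom; apply: eq_msum => m Hm.
by rewrite pdeg_pcm.
Qed.

Lemma binom_K2 U T (x y : K) :
  \sum_(V <- supp U) (pbinom U V)%:R * (x ^+ (pdeg U - pdeg V) *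
      ((pbinom V T)%:R * y ^+ (pdeg V - pdeg T)))
  = (pbinom U T)%:R * (x + y) ^+ (pdeg U - pdeg T).
Proof.
rewrite sum_binom.
rewrite (eq_msum (G := fun m => msum (pdeg U) (fun J =>
   if all2 implb J m then ((pcontract U J == ptval T) : nat)%:R *
     (x ^+ (pdeg U - count id m) * y ^+ (count id m - pdeg T)) else 0))); last first.
  move=> m Hm; rewrite pdeg_pcm // pbinom_msum.
  rewrite (eq_msum (n := pdeg (pcm U m)) (G := fun m' => ((pcontract U (comp m m') == ptval T) : nat)%:R)); last first.
    by move=> m' Hm'; rewrite pcontract_comp // -(pdeg_pcm Hm).
  rewrite pdeg_pcm // (msum_comp m (fun J => ((pcontract U J == ptval T) : nat)%:R)) Hm.
  rewrite /msum big_distrl big_distrr /=; apply: eq_bigr => J _.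
  by case: ifP => _; rewrite ?mul0r ?mulr0 // mulrCA mulrC.
rewrite /msum exchange_big /= pbinom_msum /msum big_distrl /=.
apply: eq_bigr => J _.
case: eqP => HT; last first.
  by rewrite mul0r big1 // => m _; case: ifP => _; rewrite ?mul0r.
rewrite mul1r.
have HJ : pdeg T = count id J.
  by rewrite -(@pdeg_pcm U J) ?size_tuple // /pcm; congr pdeg; apply: val_inj.
have := msum_sup J x y; rewrite size_tuple /msum HJ => <-.
by apply: eq_bigr => m _; case: ifP => _; rewrite ?mul1r.
Qed.

End Ident.

End CombPart.
Import CombPart.

Module AnalPart.

Local Open Scope ring_scope.

Lemma sum_eqmem (V : nmodType) (T : eqType) (s1 s2 : seq T) (F : T -> V) :
  uniq s1 -> uniq s2 -> s1 =i s2 -> \sum_(i <- s1) F i = \sum_(i <- s2) F i.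
Proof. by move=> u1 u2 e; apply: perm_big; exact: uniq_perm. Qed.

Lemma sum_supp (V : nmodType) (T : eqType) (A B : seq T) (F : T -> V) :
  uniq A -> uniq B -> {subset A <= B} ->
  (forall x, x \in B -> x \notin A -> F x = 0) ->
  \sum_(i <- B) F i = \sum_(i <- A) F i.
Proof.
move=> uA uB sAB z.
have Z : \sum_(i <- B | i \notin A) F i = 0.
  by rewrite big1_seq // => i /andP[H1 H2]; apply: z.
have E : \sum_(i <- B) F i = \sum_(i <- B | i \in A) F i + \sum_(i <- B | i \notin A) F i.
  exact: bigID.
rewrite E Z addr0.
rewrite -big_filter; apply: sum_eqmem; [exact: filter_uniq | done |].
move=> x; rewrite mem_filter; apply/andP/idP => [[]//|H]; split => //; exact: sAB.
Qed.

Lemma sub_sum (R : numDomainType) (T : eqType) (A B : seq T) (F : T -> R) :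
  uniq A -> uniq B -> (forall x, x \in B -> 0 <= F x) ->
  (forall x, x \in A -> x \notin B -> F x = 0) ->
  \sum_(i <- A) F i <= \sum_(i <- B) F i.
Proof.
move=> uA uB F0 z.
have E1 : \sum_(i <- B) F i = \sum_(i <- B | i \in A) F i + \sum_(i <- B | i \notin A) F i.
  exact: bigID.
have E2 : \sum_(i <- A) F i = \sum_(i <- A | i \in B) F i.
  have Z : \sum_(i <- A | i \notin B) F i = 0.
    by rewrite big1_seq // => i /andP[H1 H2]; apply: z.
  have E : \sum_(i <- A) F i = \sum_(i <- A | i \in B) F i + \sum_(i <- A | i \notin B) F i.
    exact: bigID.
  by rewrite E Z addr0.
have E3 : \sum_(i <- A | i \in B) F i = \sum_(i <- B | i \in A) F i.
  rewrite -[LHS]big_filter -[RHS]big_filter; apply: sum_eqmem; try exact: filter_uniq.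
  by move=> x; rewrite !mem_filter andbC.
rewrite E1 E2 E3; apply: ler_wpDr => //.
by rewrite big_seq_cond; apply: sumr_ge0 => i /andP[iB _]; exact: F0.
Qed.
Section NormC.
Variable R : realType.
Local Notation C := (R[i]).
Local Notation nc := (@ComplexField.Normc.normc R).

Lemma nc_ge0 (x : C) : 0 <= nc x.
Proof. by case: x => a b /=; exact: sqrtr_ge0. Qed.

Lemma nc_D (x y : C) : nc (x + y) <= nc x + nc y.
Proof. exact: le_normcD. Qed.

Lemma nc_M (x y : C) : nc (x * y) = nc x * nc y.
Proof. exact: ComplexField.Normc.normcM. Qed.

Lemma nc_real (r : R) : nc (r%:C)%C = `|r|.
Proof. by rewrite /ComplexField.Normc.normc /= expr0n addr0 sqrtr_sqr. Qed.

Lemma nc_N (x : C) : nc (- x) = nc x.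
Proof. exact: normcN. Qed.

Lemma nc_B (x y : C) : nc (x - y) = nc (y - x).
Proof. by rewrite -opprB nc_N. Qed.

Lemma nc0 : nc 0 = 0.
Proof. exact: ComplexField.Normc.normc0. Qed.

Lemma nc_norm (x : C) : `|x| = (nc x)%:C%C.
Proof. by rewrite normc_def; case: x. Qed.

Lemma nc_Re (x : C) : `|complex.Re x| <= nc x.
Proof.
case: x => a b /=; rewrite -sqrtr_sqr ler_wsqrtr // lerDl; exact: sqr_ge0.
Qed.

Lemma nc_Im (x : C) : `|complex.Im x| <= nc x.
Proof.
case: x => a b /=; rewrite -sqrtr_sqr ler_wsqrtr // lerDr; exact: sqr_ge0.
Qed.

Lemma nc_exp (x : C) n : nc (x ^+ n) = nc x ^+ n.
Proof.
elim: n => [|n IH]; first by rewrite !expr0 ComplexField.Normc.normc1.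
by rewrite !exprS nc_M IH.
Qed.

Lemma nc_nat n : nc (n%:R : C) = n%:R.
Proof.
have -> : (n%:R : C) = ((n%:R : R)%:C)%C by rewrite rmorph_nat.
by rewrite nc_real ger0_norm.
Qed.

Lemma nc_sum (T : Type) (s : seq T) (F : T -> C) :
  nc (\sum_(i <- s) F i) <= \sum_(i <- s) nc (F i).
Proof.
elim: s => [|a s IH]; first by rewrite !big_nil nc0.
rewrite !big_cons; apply: le_trans (nc_D _ _) _; exact: lerD.
Qed.
End NormC.

Lemma pl_filter (I : choiceType) : ProperFilter (@pl_totally I).
Proof.
apply: filter_from_proper.
  apply: filter_fromT_filter; first by exists fset0.
  move=> A B; exists (A `|` B)%fset => C /= HC; split.
    exact: fsubset_trans (fsubsetUl A B) HC.
  exact: fsubset_trans (fsubsetUr A B) HC.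
by move=> A _; exists A => /=; exact: fsubset_refl.
Qed.
#[export] Existing Instance pl_filter.

Section USum.
Variable R : realType.
Local Notation C := (R[i]).
Local Notation nc := (@ComplexField.Normc.normc R).

Definition psum {I : choiceType} {V : nmodType} (f : I -> V) (A : {fset I}) : V :=
  \sum_(i <- A) f i.
Definition bnd {I : choiceType} (p : I -> R) :=
  exists M, forall A : {fset I}, psum p A <= M.
Definition asum {I : choiceType} (f : I -> C) := bnd (fun i => nc (f i)).
Definition tsmall {I : choiceType} (f : I -> C) (L : C) :=
  forall e : R, 0 < e -> exists A0 : {fset I}, forall B : {fset I},
    fsubset A0 B -> nc (psum f B - L) <= e.
Definition us {I : choiceType} (f : I -> C) : C := usum (fun i => (f i : C^o)).

Lemma us_tsmall (I : choiceType) (f : I -> C) L : tsmall f L -> us f = L.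
Proof.
move=> H.
have HC : (pl_partial_sum (fun i => f i : C^o) @ pl_totally --> (L : C^o))%classic.
  apply/cvgrPdist_le => eps.
  case: eps => er ei; rewrite ltcE /= => /andP[/eqP Hi He]; subst ei.
  have [A0 HA0] := H er He.
  exists A0 => // B HB /=.
  rewrite nc_norm lecR nc_B.
  have -> : pl_partial_sum (fun i => f i : C^o) B = psum f B.
    by rewrite /pl_partial_sum /psum big_seq_fsetE.
  exact: HA0.
rewrite /us /usum.
exact: (norm_cvg_lim HC).
Qed.

Section Props.
Variable I : choiceType.
Implicit Types (f g : I -> C) (p q : I -> R) (A B : {fset I}).

Lemma psum_ext (V : nmodType) (f g : I -> V) A : (forall i, f i = g i) -> psum f A = psum g A.
Proof. by move=> H; apply: eq_bigr => i _; rewrite H. Qed.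

Lemma psum_add (V : nmodType) (f g : I -> V) A : psum (fun i => f i + g i) A = psum f A + psum g A.
Proof. exact: big_split. Qed.

Lemma psum_scale (c : C) f A : psum (fun i => c * f i) A = c * psum f A.
Proof. by rewrite /psum big_distrr. Qed.

Lemma psum_C p A : psum (fun i => (p i)%:C%C) A = ((psum p A)%:C)%C.
Proof. by rewrite /psum rmorph_sum. Qed.

Lemma psum_mono p A B : (forall i, 0 <= p i) -> fsubset A B -> psum p A <= psum p B.
Proof.
move=> p0 /fsubsetP sAB; apply: sub_sum; rewrite ?fset_uniq //.
by move=> x /sAB ->.
Qed.

Lemma psum_ge0 p A : (forall i, 0 <= p i) -> 0 <= psum p A.
Proof. by move=> p0; apply: sumr_ge0. Qed.

Lemma psum_nc f A : nc (psum f A) <= psum (fun i => nc (f i)) A.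
Proof. exact: nc_sum. Qed.

Lemma bnd_mono p q : (forall i, q i <= p i) -> bnd p -> bnd q.
Proof.
move=> H [M HM]; exists M => A; apply: le_trans (HM A); exact: ler_sum.
Qed.

Lemma asum_mono f g : (forall i, nc (g i) <= nc (f i)) -> asum f -> asum g.
Proof. exact: bnd_mono. Qed.

Lemma asum_add f g : asum f -> asum g -> asum (fun i => f i + g i).
Proof.
move=> [M1 H1] [M2 H2]; exists (M1 + M2) => A.
apply: le_trans (lerD (H1 A) (H2 A)); rewrite -psum_add; apply: ler_sum => i _.
exact: nc_D.
Qed.

Lemma asum_scale c f : asum f -> asum (fun i => c * f i).
Proof.
move=> [M H]; exists (nc c * M) => A.
rewrite (psum_ext (g := fun i => nc c * nc (f i))) => [|i]; last by rewrite nc_M.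
by rewrite /psum -big_distrr ler_wpM2l ?nc_ge0 // H.
Qed.

Lemma tsmall_ext f g L : (forall i, f i = g i) -> tsmall f L -> tsmall g L.
Proof.
move=> E H e e0; have [A0 HA] := H e e0; exists A0 => B HB.
by rewrite -(psum_ext _ E) HA.
Qed.

Lemma tsmall_add f g L1 L2 : tsmall f L1 -> tsmall g L2 ->
  tsmall (fun i => f i + g i) (L1 + L2).
Proof.
move=> H1 H2 e e0.
have e20 : 0 < e / 2 by rewrite divr_gt0.
have [A1 HA1] := H1 _ e20; have [A2 HA2] := H2 _ e20.
exists (A1 `|` A2)%fset => B HB.
have HB1 : fsubset A1 B := fsubset_trans (fsubsetUl A1 A2) HB.
have HB2 : fsubset A2 B := fsubset_trans (fsubsetUr A1 A2) HB.
rewrite psum_add (_ : _ - _ = (psum f B - L1) + (psum g B - L2)); last first.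
  by rewrite opprD addrACA.
apply: le_trans (nc_D _ _) _; rewrite (splitr e); exact: lerD (HA1 _ HB1) (HA2 _ HB2).
Qed.

Lemma tsmall_scale c f L : tsmall f L -> tsmall (fun i => c * f i) (c * L).
Proof.
move=> H e e0.
have e1 : 0 < e / (nc c + 1) by rewrite divr_gt0 // ltr_wpDl ?nc_ge0.
have [A0 HA] := H _ e1; exists A0 => B HB.
rewrite psum_scale -mulrBr nc_M.
apply: le_trans (ler_wpM2l (nc_ge0 _) (HA _ HB)) _.
rewrite mulrA ler_pdivrMr ?ltr_wpDl ?nc_ge0 // mulrDr mulr1 mulrC.
by rewrite lerDl ltW.
Qed.

Lemma real_sup p : (forall i, 0 <= p i) -> bnd p ->
  exists L, (forall A, psum p A <= L) /\ (forall e, 0 < e -> exists A0, L - e < psum p A0).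
Proof.
move=> p0 [M HM].
set S := [set psum p A | A in [set: {fset I}]]%classic.
have hS : has_sup S.
  split; first by exists (psum p fset0), fset0.
  by exists M => _ [A _ <-].
exists (sup S); split.
  by move=> A; apply: sup_upper_bound => //; exists A.
move=> e e0; have [_ [A _ <-] HA] := sup_adherent e0 hS.
by exists A.
Qed.

Lemma tsmall_real p : (forall i, 0 <= p i) -> bnd p ->
  exists L : R, tsmall (fun i => (p i)%:C%C) (L%:C)%C.
Proof.
move=> p0 Hb; have [L [H1 H2]] := real_sup p0 Hb.
exists L => e e0; have [A0 HA0] := H2 _ e0; exists A0 => B HB.
rewrite psum_C -rmorphB nc_real.
have h1 := H1 B; have h2 := psum_mono p0 HB.
rewrite ler_norml; apply/andP; split; first by rewrite lerBrDr; lra.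
by rewrite lerBlDr; lra.
Qed.

Lemma tail p : (forall i, 0 <= p i) -> bnd p ->
  forall e, 0 < e -> exists A1 : {fset I}, forall B : {fset I},
    \sum_(i <- B | i \notin A1) p i <= e.
Proof.
move=> p0 Hb; have [L [H1 H2]] := real_sup p0 Hb.
move=> e e0; have [A1 HA1] := H2 _ e0; exists A1 => B.
have := H1 (A1 `|` B)%fset.
have E : psum p (A1 `|` B)%fset = psum p A1 + \sum_(i <- B | i \notin A1) p i.
  have E1 : psum p (A1 `|` B)%fset = \sum_(i <- (A1 `|` B)%fset | i \in A1) p i
      + \sum_(i <- (A1 `|` B)%fset | i \notin A1) p i by exact: bigID.
  rewrite E1; congr (_ + _).
    rewrite -big_filter /psum; apply: sum_eqmem; rewrite ?filter_uniq ?fset_uniq //.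
    by move=> x; rewrite mem_filter in_fsetU; case: (x \in A1).
  rewrite -[LHS]big_filter -[RHS]big_filter; apply: sum_eqmem; rewrite ?filter_uniq ?fset_uniq //.
  by move=> x; rewrite !mem_filter in_fsetU; case: (x \in A1).
rewrite E; lra.
Qed.

Definition ppart (a : R) := (a + `|a|) / 2.
Definition npart (a : R) := (`|a| - a) / 2.
Lemma posneg (a : R) : ppart a - npart a = a.
Proof. rewrite /ppart /npart; lra. Qed.

Lemma maxp_le (a : R) : 0 <= ppart a <= `|a|.
Proof.
have h1 := ler_norm a; have h2 : - a <= `|a| by rewrite -normrN ler_norm.
rewrite /ppart; apply/andP; split; lra.
Qed.

Lemma maxn_le (a : R) : 0 <= npart a <= `|a|.
Proof.
have h1 := ler_norm a; have h2 : - a <= `|a| by rewrite -normrN ler_norm.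
rewrite /npart; apply/andP; split; lra.
Qed.

Lemma asum_ex f : asum f -> exists L, tsmall f L.
Proof.
move=> Hf.
pose p1 i := ppart (complex.Re (f i)).
pose p2 i := npart (complex.Re (f i)).
pose p3 i := ppart (complex.Im (f i)).
pose p4 i := npart (complex.Im (f i)).
have b1 : bnd p1.
  apply: bnd_mono Hf => i; have /andP[_ h] := maxp_le (complex.Re (f i)); exact: le_trans h (nc_Re _).
have b2 : bnd p2.
  apply: bnd_mono Hf => i; have /andP[_ h] := maxn_le (complex.Re (f i)); exact: le_trans h (nc_Re _).
have b3 : bnd p3.
  apply: bnd_mono Hf => i; have /andP[_ h] := maxp_le (complex.Im (f i)); exact: le_trans h (nc_Im _).
have b4 : bnd p4.
  apply: bnd_mono Hf => i; have /andP[_ h] := maxn_le (complex.Im (f i)); exact: le_trans h (nc_Im _).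
have [L1 H1] := tsmall_real (fun i => proj1 (andP (maxp_le _))) b1.
have [L2 H2] := tsmall_real (fun i => proj1 (andP (maxn_le _))) b2.
have [L3 H3] := tsmall_real (fun i => proj1 (andP (maxp_le _))) b3.
have [L4 H4] := tsmall_real (fun i => proj1 (andP (maxn_le _))) b4.
have H := tsmall_add (tsmall_add H1 (tsmall_scale (-1) H2))
            (tsmall_scale 'i%C (tsmall_add H3 (tsmall_scale (-1) H4))).
eexists; apply: tsmall_ext H => i.
rewrite !mulN1r -!rmorphB posneg posneg.
by rewrite [RHS]complexE mulrC.
Qed.

Lemma us_ts f : asum f -> tsmall f (us f).
Proof. by move=> /asum_ex [L HL]; rewrite (us_tsmall HL). Qed.

Lemma us_add f g : asum f -> asum g -> us (fun i => f i + g i) = us f + us g.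
Proof. by move=> Hf Hg; apply: us_tsmall; apply: tsmall_add; apply: us_ts. Qed.

Lemma us_scale c f : asum f -> us (fun i => c * f i) = c * us f.
Proof. by move=> Hf; apply: us_tsmall; apply: tsmall_scale; apply: us_ts. Qed.

Lemma us_ext f g : (forall i, f i = g i) -> us f = us g.
Proof. by move=> H; rewrite (funext H). Qed.

Lemma us_fin f A : (forall i, i \notin A -> f i = 0) -> us f = psum f A.
Proof.
move=> H; apply: us_tsmall => e e0; exists A => B HB.
rewrite /psum (sum_supp (A := A)) ?fset_uniq ?subrr ?nc0 ?(ltW e0) //.
  by apply/fsubsetP.
by move=> x _ /H.
Qed.

Lemma asum_fin f A : (forall i, i \notin A -> f i = 0) -> asum f.
Proof.
move=> H; exists (psum (fun i => nc (f i)) A) => B.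
rewrite /psum; apply: sub_sum; rewrite ?fset_uniq //.
  by move=> x _; exact: nc_ge0.
by move=> x _ /H ->; exact: nc0.
Qed.
End Props.
End USum.

Section USum2.
Variable R : realType.
Local Notation C := (R[i]).
Local Notation nc := (@ComplexField.Normc.normc R).

Lemma us_seq (I J : choiceType) (s : seq J) (F : J -> I -> C) :
  (forall j, asum (F j)) ->
  asum (fun i => \sum_(j <- s) F j i) /\
  us (fun i => \sum_(j <- s) F j i) = \sum_(j <- s) us (F j).
Proof.
move=> HF; elim: s => [|j s [IH1 IH2]].
  split; first by apply: (asum_fin (A := fset0)) => i _; rewrite big_nil.
  rewrite big_nil (us_fin (A := fset0)) => [|i _]; last by rewrite big_nil.
  by rewrite /psum big_seq_fset0.
have E : forall i, \sum_(j0 <- j :: s) F j0 i = F j i + \sum_(j0 <- s) F j0 i.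
  by move=> i; rewrite big_cons.
split; first by apply: asum_mono _ (asum_add (HF j) IH1) => i; rewrite E.
by rewrite (us_ext E) us_add // IH2 big_cons.
Qed.

Lemma common (I J : choiceType) (s : seq J) (F : J -> I -> C) (L : J -> C) :
  (forall j, tsmall (F j) (L j)) -> forall e, 0 < e ->
  exists A0 : {fset I}, forall B, fsubset A0 B ->
    forall j, j \in s -> nc (psum (F j) B - L j) <= e.
Proof.
move=> H e e0; elim: s => [|j s [A0 HA0]]; first by exists fset0.
have [A1 HA1] := H j e e0.
exists (A0 `|` A1)%fset => B HB j'; rewrite in_cons => /orP[/eqP ->|Hj'].
  apply: HA1; exact: fsubset_trans (fsubsetUr _ _) HB.
apply: HA0 => //; exact: fsubset_trans (fsubsetUl _ _) HB.
Qed.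

Lemma us_le_fam (I J : choiceType) (s : seq J) (F : J -> I -> C) (w : J -> R) (M : R) :
  (forall j, asum (F j)) -> (forall j, 0 <= w j) ->
  (forall A : {fset I}, \sum_(j <- s) w j * psum (fun i => nc (F j i)) A <= M) ->
  \sum_(j <- s) w j * nc (us (F j)) <= M.
Proof.
move=> HF w0 HM; apply/ler_addgt0Pr => e e0.
set W := \sum_(j <- s) w j.
have W0 : 0 <= W by apply: sumr_ge0.
have e1 : 0 < e / (W + 1) by rewrite divr_gt0 // ltr_wpDl.
have [A0 HA0] := common s (fun j => us_ts (HF j)) e1.
have HA := HA0 A0 (fsubset_refl _).
apply: (@le_trans _ _ (\sum_(j <- s) w j * (psum (fun i => nc (F j i)) A0 + e / (W + 1)))).
  rewrite big_seq [X in _ <= X]big_seq; apply: ler_sum => j js; apply: ler_wpM2l => //.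
  have h1 := HA j js; have h2 := psum_nc (F j) A0.
  have h3 : nc (us (F j)) <= nc (us (F j) - psum (F j) A0) + nc (psum (F j) A0).
    by rewrite -[X in nc X <= _](subrK (psum (F j) A0)); exact: nc_D.
  rewrite nc_B in h3; lra.
have -> : \sum_(j <- s) w j * (psum (fun i => nc (F j i)) A0 + e / (W + 1)) =
    \sum_(j <- s) w j * psum (fun i => nc (F j i)) A0 + e / (W + 1) * W.
  rewrite /W big_distrr /= -big_split /=; apply: eq_bigr => j _.
  by rewrite mulrDr [_ * (e / _)]mulrC.
have HW : e / (W + 1) * W <= e.
  rewrite mulrAC ler_pdivrMr ?ltr_wpDl // ler_wpM2l ?(ltW e0) //.
  by rewrite lerDl.
have := HM A0; lra.
Qed.

Lemma us_le (I : choiceType) (f : I -> C) M : asum f ->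
  (forall A, psum (fun i => nc (f i)) A <= M) -> nc (us f) <= M.
Proof.
move=> Hf HM.
have := @us_le_fam I unit [:: tt] (fun _ => f) (fun _ => 1) M (fun _ => Hf) (fun _ => ler01).
rewrite big_seq1 mul1r; apply => A; rewrite big_seq1 mul1r; exact: HM.
Qed.

Lemma fubini (I J : choiceType) (h : I -> J -> C) (S : I -> seq J) :
  (forall i, uniq (S i)) -> (forall i j, j \notin S i -> h i j = 0) ->
  bnd (fun i => \sum_(j <- S i) nc (h i j)) ->
  us (fun j => us (fun i => h i j)) = us (fun i => \sum_(j <- S i) h i j).
Proof.
move=> Su Sz Hb.
set q := fun i => \sum_(j <- S i) nc (h i j).
have q0 : forall i, 0 <= q i by move=> i; apply: sumr_ge0 => j _; exact: nc_ge0.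
have hle : forall i j, nc (h i j) <= q i.
  move=> i j; rewrite /q.
  have := @sub_sum R J [:: j] (S i) (fun j => nc (h i j)) erefl (Su i) (fun x _ => nc_ge0 _).
  rewrite big_seq1; apply => x; rewrite inE => /eqP -> /Sz ->; exact: nc0.
have Hcol : forall j, asum (fun i => h i j).
  by move=> j; apply: bnd_mono Hb => i; exact: hle.
set H := fun i => \sum_(j <- S i) h i j.
have HH : asum H by apply: bnd_mono Hb => i; exact: nc_sum.
apply: us_tsmall => e e0.
have e2 : 0 < e / 2 by rewrite divr_gt0.
have [A1 HA1] := tail q0 Hb e2.
have [A2 HA2] := us_ts HH e2.
set A0 := (A1 `|` A2)%fset.
exists (seq_fset tt (flatten (map S A0))) => Bj HBj.
have HS : forall i j, i \in A0 -> j \in S i -> j \in Bj.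
  move=> i j iA jS; apply: (fsubsetP HBj); rewrite seq_fsetE.
  by apply/flattenP; exists (S i) => //; exact: map_f.
pose h' i j := if i \in A0 then 0 else h i j.
have Hcol' : forall j, asum (fun i => h' i j).
  move=> j; apply: asum_mono (Hcol j) => i; rewrite /h'.
  by case: (i \in A0); rewrite ?nc0 ?nc_ge0.
have split_us : forall j, us (fun i => h i j) = psum (fun i => h i j) A0 + us (fun i => h' i j).
  move=> j.
  have -> : us (fun i => h i j) = us (fun i => (if i \in A0 then h i j else 0) + h' i j).
    by apply: us_ext => i; rewrite /h'; case: (i \in A0); rewrite ?addr0 ?add0r.
  rewrite us_add //; last by apply: (asum_fin (A := A0)) => i /negbTE ->.
  congr (_ + _); rewrite (us_fin (A := A0)) => [|i /negbTE -> //].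
  by rewrite /psum; apply: eq_big_seq => i ->.
rewrite /psum (eq_bigr _ (fun j _ => split_us j)) big_split /=.
have E1 : \sum_(j <- Bj) psum (fun i => h i j) A0 = psum H A0.
  rewrite /psum exchange_big /=; apply: eq_big_seq => i iA.
  rewrite /H; apply: sum_supp; rewrite ?fset_uniq ?Su //.
    by move=> j; exact: HS.
  by move=> j _ /Sz.
rewrite E1 -(proj2 (us_seq Bj Hcol')).
set X := us _.
have HX : nc X <= e / 2.
  apply: us_le; first exact: (proj1 (us_seq Bj Hcol')).
  move=> A; apply: (@le_trans _ _ (\sum_(i <- A | i \notin A1) q i)); last exact: HA1.
  rewrite big_mkcond /=; apply: ler_sum => i _.
  apply: le_trans (nc_sum _ _) _.
  rewrite /h'; case: (boolP (i \in A0)) => iA0.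
    rewrite big1; last by move=> j _; rewrite nc0.
    by case: (i \notin A1) => //; exact: q0.
  have -> : i \notin A1 by apply: contra iA0 => iA1; rewrite in_fsetU iA1.
  rewrite /q; apply: sub_sum; rewrite ?fset_uniq ?Su //.
    by move=> x _; exact: nc_ge0.
  by move=> x _ /Sz ->; exact: nc0.
have HA : nc (psum H A0 - us H) <= e / 2 by apply: HA2; exact: fsubsetUr.
rewrite (_ : _ - _ = (psum H A0 - us H) + X); last by rewrite addrAC.
apply: le_trans (nc_D _ _) _; rewrite (splitr e); exact: lerD.
Qed.
End USum2.

End AnalPart.
Import AnalPart.

Module SerPart.

Local Open Scope ring_scope.

Section Ser.
Variable R : realType.
Local Notation C := (R[i]).
Local Notation nc := (@ComplexField.Normc.normc R).

Definition Wb (g : pser R) (rho : R) := bnd (fun U : ptree => nc (g U) * rho ^+ pdeg U).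

Lemma pexpE (g : pser R) a b T : pexpansion g a b T =
  us (fun U => g U * (pbinom U T)%:R * (b - a) ^+ (pdeg U - pdeg T)).
Proof. by []. Qed.

Lemma prad_lt (g : pser R) (s : R) : 0 <= s -> (s%:E < prad g)%E ->
  exists rho, s < rho /\ Wb g rho.
Proof.
move=> s0 /ereal_sup_gt [_ [rho [rho0 Hfin] <-]]; rewrite lte_fin => srho.
exists rho; split => //.
set E := (\esum_(T in [set: ptree]) _)%E in Hfin.
have E0 : (0 <= E)%E.
  by apply: esum_ge0 => T _; rewrite lee_fin mulr_ge0 ?nc_ge0 ?exprn_ge0.
have Ef : E \is a fin_num by rewrite ge0_fin_numE.
exists (fine E) => A; rewrite -lee_fin fineK // /psum -sumEFin.
rewrite fsbig_seq ?fset_uniq //.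
by apply: ereal_sup_ubound; exists [set` A]%classic.
Qed.

Lemma prad_ge (g : pser R) (rho : R) : 0 <= rho -> Wb g rho -> (rho%:E <= prad g)%E.
Proof.
move=> r0 [M HM]; apply: ereal_sup_ubound; exists rho => //; split => //.
apply: (@le_lt_trans _ _ M%:E); last exact: ltry.
apply: ge_ereal_sup => _ [X [finX _] <-].
rewrite fsbig_finite // sumEFin lee_fin.
exact: HM.
Qed.

Lemma binom_bound U T (a rho : R) : 0 <= a -> a <= rho ->
  (pbinom U T)%:R * a ^+ (pdeg U - pdeg T) * (rho - a) ^+ pdeg T <= rho ^+ pdeg U.
Proof.
move=> a0 ar.
have ge : forall V, 0 <= (pbinom U V)%:R * (a ^+ (pdeg U - pdeg V) * (rho - a) ^+ pdeg V).
  by move=> V; rewrite mulr_ge0 ?ler0n // mulr_ge0 ?exprn_ge0 // subr_ge0.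
have := binom_K1 U a (rho - a); rewrite [a + _]addrC subrK => <-.
case: (boolP (T \in supp U)) => HT; last first.
  rewrite pbinom_supp // !mul0r; apply: sumr_ge0 => V _; exact: ge.
have := @sub_sum R ptree [:: T] (supp U)
  (fun V => (pbinom U V)%:R * (a ^+ (pdeg U - pdeg V) * (rho - a) ^+ pdeg V))
  erefl (supp_uniq U) (fun V _ => ge V).
rewrite big_seq1 mulrA; apply => V; rewrite inE => /eqP ->.
by rewrite HT.
Qed.

Lemma asum_exp (g : pser R) rho (x : C) T : Wb g rho -> nc x < rho ->
  asum (fun U => g U * (pbinom U T)%:R * x ^+ (pdeg U - pdeg T)).
Proof.
move=> [M HM] hx.
have x0 := nc_ge0 x.
have d0 : 0 < rho - nc x by rewrite subr_gt0.
exists (M / (rho - nc x) ^+ pdeg T) => A.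
rewrite ler_pdivlMr ?exprn_gt0 // /psum big_distrl /=.
apply: le_trans (HM A); apply: ler_sum => U _.
rewrite !nc_M nc_nat nc_exp.
have hb := binom_bound U T x0 (ltW hx).
rewrite -!mulrA; apply: ler_wpM2l; first exact: nc_ge0.
by rewrite mulrA.
Qed.

Lemma rad_exp (g : pser R) (c d : C) (t : R) : 0 <= t ->
  ((nc (d - c) + t)%:E < prad g)%E -> (t%:E < prad (pexpansion g c d))%E.
Proof.
move=> t0 H.
have x0 := nc_ge0 (d - c).
have s0 : 0 <= nc (d - c) + t by rewrite addr_ge0.
have [rho [hr Hw]] := prad_lt s0 H.
have [M HM] := Hw.
set x := d - c in x0 hr Hw HM *.
set r' := rho - nc x.
have r'0 : 0 <= r' by rewrite /r'; lra.
apply: (@lt_le_trans _ _ r'%:E); first by rewrite lte_fin /r'; lra.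
apply: prad_ge => //; exists M => A.
rewrite /psum.
under eq_bigr do rewrite mulrC.
apply: (us_le_fam (F := fun T U => g U * (pbinom U T)%:R * x ^+ (pdeg U - pdeg T))).
- move=> T; apply: asum_exp Hw _; lra.
- by move=> T; rewrite exprn_ge0.
move=> B; rewrite /psum.
under eq_bigr do rewrite big_distrr.
rewrite exchange_big /=.
apply: le_trans (HM B); apply: ler_sum => U _.
have E : forall T, r' ^+ pdeg T * nc (g U * (pbinom U T)%:R * x ^+ (pdeg U - pdeg T))
   = nc (g U) * ((pbinom U T)%:R * (nc x ^+ (pdeg U - pdeg T) * r' ^+ pdeg T)).
  by move=> T; rewrite !nc_M nc_nat nc_exp; ring.
rewrite (eq_bigr _ (fun T _ => E T)) -big_distrr /=.
apply: ler_wpM2l; first exact: nc_ge0.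
have -> : rho = nc x + r' by rewrite /r'; ring.
rewrite -binom_K1; apply: sub_sum; rewrite ?fset_uniq ?supp_uniq //.
  by move=> V _; rewrite mulr_ge0 ?ler0n // mulr_ge0 ?exprn_ge0 ?nc_ge0.
by move=> V _ /pbinom_supp ->; rewrite mul0r.
Qed.

Lemma exp_comp (g : pser R) (c d e : C) :
  ((nc (d - c) + nc (e - d))%:E < prad g)%E ->
  pexpansion (pexpansion g c d) d e = pexpansion g c e.
Proof.
move=> H.
have x0 := nc_ge0 (d - c); have y0 := nc_ge0 (e - d).
have s0 : 0 <= nc (d - c) + nc (e - d) by rewrite addr_ge0.
have [rho [hr Hw]] := prad_lt s0 H.
have [M HM] := Hw.
apply: funext => T.
have xy : e - c = (d - c) + (e - d) by rewrite [RHS]addrC addrA subrK.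
set x := d - c in x0 hr Hw HM xy *.
set y := e - d in y0 hr Hw HM xy *.
rewrite !pexpE.
pose h U V := g U * ((pbinom U V)%:R * (x ^+ (pdeg U - pdeg V) *
   ((pbinom V T)%:R * y ^+ (pdeg V - pdeg T)))).
have -> : us (fun V => us (fun U => g U * (pbinom U V)%:R * x ^+ (pdeg U - pdeg V))
    * (pbinom V T)%:R * y ^+ (pdeg V - pdeg T)) = us (fun V => us (fun U => h U V)).
  apply: us_ext => V; rewrite -mulrA mulrC -us_scale; last first.
    apply: asum_exp Hw _; lra.
  by apply: us_ext => U; rewrite /h; ring.
rewrite (@fubini R ptree ptree h supp).
- apply: us_ext => U; rewrite /h -big_distrr /= binom_K2 xy; ring.
- exact: supp_uniq.
- by move=> U V /pbinom_supp; rewrite /h => ->; rewrite mul0r mulr0.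
set s := nc x + nc y.
have ds : 0 < rho - s by rewrite subr_gt0.
exists (M / (rho - s) ^+ pdeg T) => A.
rewrite ler_pdivlMr ?exprn_gt0 // /psum big_distrl /=.
apply: le_trans (HM A); apply: ler_sum => U _.
have E : forall V, nc (h U V) = nc (g U) * ((pbinom U V)%:R * (nc x ^+ (pdeg U - pdeg V) *
   ((pbinom V T)%:R * nc y ^+ (pdeg V - pdeg T)))).
  by move=> V; rewrite /h !nc_M !nc_nat !nc_exp.
rewrite (eq_bigr _ (fun V _ => E V)) -big_distrr /= binom_K2 -mulrA.
apply: ler_wpM2l; first exact: nc_ge0.
have := binom_bound U T (addr_ge0 x0 y0) (ltW hr); rewrite -/s.
by [].
Qed.

Lemma exp_id (g : pser R) (b : C) : pexpansion g b b = g.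
Proof.
apply: funext => T; rewrite pexpE subrr (us_fin (A := [fset T]%fset)).
  by rewrite /psum big_seq_fset1 pbinom_diag // eqxx subnn expr0 !mulr1.
move=> U; rewrite in_fset1 => HU.
case: (leqP (pdeg U) (pdeg T)) => h.
  by rewrite pbinom_diag // (negbTE HU) mulr0 mul0r.
by rewrite expr0n subn_eq0 leqNgt h /= mulr0.
Qed.
End Ser.

End SerPart.
Import SerPart.

Local Open Scope ring_scope.

Lemma exists_between (R : realType) (x : R) (y : \bar R) :
  (x%:E < y)%E -> exists r : R, x < r /\ (r%:E < y)%E.
Proof.
case: y => [y| |] //=.
  rewrite lte_fin => h; exists ((x + y) / 2); rewrite lte_fin; split; lra.
by move=> _; exists (x + 1); split; [lra | exact: ltry].
Qed.

Local Notation nc := (@ComplexField.Normc.normc _).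

Unset Implicit Arguments.
Theorem proposition3p1 (R : realType) (f : pser R) :
  (0 < prad f)%E ->
  planar_analytic
    [set a : complex R | ((ComplexField.Normc.normc a)%:E < prad f)%E]
    (fun a => pexpansion f 0 a).
Proof.
move=> _; split.
  move=> a Ha; have := @rad_exp R f 0 a 0 (lexx 0).
  by rewrite subr0 addr0; apply.
move=> a b Ha Hb Hab.
set F := fun x => pexpansion f 0 x.
have [m [ma [mb mP]]] : exists m, nc a <= m /\ nc b <= m /\ (m%:E < prad f)%E.
  case: (lerP (nc a) (nc b)) => h; [exists (nc b) | exists (nc a)].
    by split => //; split => //.
  by split; [|split] => //; exact: ltW.
have [r [mr rP]] := exists_between mP.
set D := nc (b - a).
have D0 : 0 <= D := nc_ge0 _.
set del := r - m.
have del0 : 0 < del by rewrite /del subr_gt0.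
set N := (Num.trunc (D / del)).+1.
have HN : D / del < N%:R := truncnS_gt _.
have N0 : 0 < N%:R :> R by rewrite ltr0n.
have hD : D / N%:R < del.
  by rewrite ltr_pdivrMr // in HN; rewrite ltr_pdivrMr // mulrC.
set t := fun k : nat => (k%:R / N%:R : R).
set ck := fun k : nat => a + ((t k)%:C)%C * (b - a).
have t0 : t 0%N = 0 by rewrite /t mul0r.
have tN : t N = 1 by rewrite /t divff // pnatr_eq0.
have tS : forall k, t k.+1 = t k + N%:R^-1 by move=> k; rewrite /t -natr1 mulrDl mul1r.
have t_ge0 : forall k, 0 <= t k by move=> k; rewrite /t divr_ge0 ?ler0n.
have t_le1 : forall k, (k <= N)%N -> t k <= 1.
  by move=> k hk; rewrite /t ler_pdivrMr // mul1r ler_nat.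
have ck0 : ck 0%N = a by rewrite /ck t0 rmorph0 mul0r addr0.
have ckN : ck N = b by rewrite /ck tN rmorph1 mul1r addrC subrK.
have Hbck : forall k, b - ck k = ((1 - t k)%:C)%C * (b - a).
  by move=> k; rewrite /ck rmorphB rmorph1; ring.
have Hstep : forall k, ck k.+1 - ck k = ((N%:R^-1)%:C)%C * (b - a).
  by move=> k; rewrite /ck tS rmorphD; ring.
have Hck : forall k, (k <= N)%N -> nc (ck k) <= m.
  move=> k hk.
  have -> : ck k = ((1 - t k)%:C)%C * a + ((t k)%:C)%C * b.
    by rewrite /ck rmorphB rmorph1; ring.
  apply: le_trans (nc_D _ _) _.
  rewrite !nc_M !nc_real !ger0_norm ?subr_ge0 ?t_le1 //.
  have h1 : (1 - t k) * nc a <= (1 - t k) * m.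
    by apply: ler_wpM2l; rewrite // subr_ge0 t_le1.
  have h2 : t k * nc b <= t k * m by apply: ler_wpM2l.
  have h3 : (1 - t k) * m + t k * m = m by ring.
  lra.
have Hnb : forall k, (k <= N)%N -> nc (b - ck k) = (1 - t k) * D.
  by move=> k hk; rewrite Hbck nc_M nc_real ger0_norm // subr_ge0 t_le1.
have Hnh : forall k, nc (ck k.+1 - ck k) = N%:R^-1 * D.
  by move=> k; rewrite Hstep nc_M nc_real ger0_norm // invr_ge0 ler0n.
have hlt : N%:R^-1 * D < del by rewrite mulrC.
have main : forall k, (k <= N)%N -> pexpansion (F a) a b = pexpansion (F (ck k)) (ck k) b /\
    ((nc (b - ck k))%:E < prad (F (ck k)))%E.
  elim => [|k IH] hk; first by rewrite ck0; split.
  have hk' : (k <= N)%N := ltnW hk.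
  have [IH1 IH2] := IH hk'.
  have Hsum : nc (ck k.+1 - ck k) + nc (b - ck k.+1) = nc (b - ck k).
    by rewrite Hnh !Hnb // tS; ring.
  have Hc1 : ((nc (ck k - 0) + nc (ck k.+1 - ck k))%:E < prad f)%E.
    rewrite subr0; apply: (@lt_trans _ _ r%:E) => //; rewrite lte_fin Hnh.
    have := Hck k hk'; rewrite /del in hlt; lra.
  have Fv : F (ck k.+1) = pexpansion (F (ck k)) (ck k) (ck k.+1).
    exact: (esym (@exp_comp R f 0 (ck k) (ck k.+1) Hc1)).
  have Hc2 : ((nc (ck k.+1 - ck k) + nc (b - ck k.+1))%:E < prad (F (ck k)))%E.
    by rewrite Hsum.
  split.
    rewrite IH1 Fv; exact: (esym (@exp_comp R (F (ck k)) (ck k) (ck k.+1) b Hc2)).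
  rewrite Fv; exact: (@rad_exp R (F (ck k)) (ck k) (ck k.+1) _ (nc_ge0 _) Hc2).
have [E1 _] := main N (leqnn N).
by rewrite E1 ckN exp_id.
Qed.
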